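(* Let $G=(V,E,\ell)$ be a finite node-labeled directed graph, let $\mathcal{L}:V\times V\to[0,1]$ satisfy $\mathcal{L}(u,v)=1$ if and only if $\ell(u)=\ell(v)$, and let $0<w^+<1$ (with $w^-=0$). Define $F^0=\mathcal{L}$ and, for $k\ge1$, $$F^k(u,v)=w^+A^k(N^+_G(u),N^+_G(v))+(1-w^+)\mathcal{L}(u,v),$$ where for $S_1,S_2\subseteq V$: $A^k(S_1,S_2)=1$ if $S_1=S_2=\emptyset$, and otherwise $$A^k(S_1,S_2)=\frac{1}{|S_1|+|S_2|}\Big(\sum_{x\in S_1}\max_{y\in S_2}F^{k-1}(x,y)+\sum_{y\in S_2}\max_{x\in S_1}F^{k-1}(x,y)\Big),$$ with the convention that a maximum over the empty set is $0$. Then for every integer $k\ge0$ and all $u,v\in V$: $u$ and $v$ are $k$-bisimilar if and only if $F^k(u,v)=1$.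
   Context: $N^+_G(u)=\{u':(u,u')\in E\}$ is the out-neighbor set of $u$. $k$-bisimilarity is defined recursively: $u$ and $v$ are $0$-bisimilar iff $\ell(u)=\ell(v)$; for $k>0$, $u$ and $v$ are $k$-bisimilar iff (1) $\ell(u)=\ell(v)$, (2) for every $u'\in N^+_G(u)$ there is $v'\in N^+_G(v)$ such that $u'$ and $v'$ are $(k-1)$-bisimilar, and (3) for every $v'\in N^+_G(v)$ there is $u'\in N^+_G(u)$ such that $u'$ and $v'$ are $(k-1)$-bisimilar. The iteration $F^k$ is the $k$-th iterate of the paper's fractional bisimulation score $\mathrm{FSim}_b$ with $w^-=0$ on a single graph. *)

(* Defs.v *)
From mathcomp Require Import all_boot all_order all_algebra.
Set Implicit Arguments. Unset Strict Implicit. Unset Printing Implicit Defensive.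
Import Order.TTheory GRing.Theory Num.Theory.
Local Open Scope ring_scope.

Section Defs.
Variables (V : finType) (L : eqType).
Variable (E : rel V) (lab : V -> L).

Definition outN (u : V) : {set V} := [set u' | E u u'].

Fixpoint kbisim (k : nat) (u v : V) : Prop :=
  match k with
  | 0 => lab u = lab v
  | k'.+1 => [/\ lab u = lab v,
      (forall u', u' \in outN u -> exists2 v', v' \in outN v & kbisim k' u' v')
    & (forall v', v' \in outN v -> exists2 u', u' \in outN u & kbisim k' u' v')]
  end.

Variable R : realFieldType.

Definition maxset (S : {set V}) (f : V -> R) : R :=
  match [pick y in S] with
  | None => 0
  | Some y0 => \big[Num.max/f y0]_(y in S) f y
  end.

Definition Aagg (F : V -> V -> R) (S1 S2 : {set V}) : R :=
  if (S1 == set0) && (S2 == set0) then 1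
  else ((#|S1| + #|S2|)%:R)^-1 *
       (\sum_(x in S1) maxset S2 (fun y => F x y)
        + \sum_(y in S2) maxset S1 (fun x => F x y)).

Fixpoint Fk (wp : R) (Lsim : V -> V -> R) (k : nat) (u v : V) : R :=
  match k with
  | 0 => Lsim u v
  | k'.+1 => wp * Aagg (Fk wp Lsim k') (outN u) (outN v) + (1 - wp) * Lsim u v
  end.
End Defs.

(* Main.v *)
Require Import Defs.
From mathcomp Require Import all_boot all_order all_algebra.
From mathcomp Require Import ring lra.
Import Order.TTheory GRing.Theory Num.Theory.
Local Open Scope ring_scope.

Set Implicit Arguments.
Local Notation mxs := Defs.maxset.

Section Aux.
Variables (R : realFieldType) (V : finType).

Lemma bigmax_att (S : {set V}) (f : V -> R) y0 : y0 \in S ->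
  exists2 y, y \in S & \big[Num.max/f y0]_(i in S) f i = f y.
Proof.
move=> Hy0.
apply: (big_ind (fun x => exists2 y, y \in S & x = f y)).
- by exists y0.
- move=> x z [y1 H1 ->] [y2 H2 ->]; rewrite maxEle; case: ifP => _.
  + by exists y2.
  + by exists y1.
- by move=> i Hi; exists i.
Qed.

Lemma bigmax_ge (r : seq V) (P : pred V) (f : V -> R) idx y :
  y \in r -> P y -> f y <= \big[Num.max/idx]_(i <- r | P i) f i.
Proof.
elim: r => [//|a r IH]; rewrite inE big_cons => /orP [/eqP <- Py|Hr Py].
  by rewrite Py le_max lexx.
case: ifP => _; last exact: IH.
by rewrite le_max (IH Hr Py) orbT.
Qed.

Lemma maxset_bnd (S : {set V}) (f : V -> R) :
  (forall y, y \in S -> 0 <= f y <= 1) -> 0 <= mxs S f <= 1.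
Proof.
move=> H; rewrite /Defs.maxset; case: pickP => [y0 Hy0|_]; last by rewrite lexx ler01.
by have [y Hy ->] := bigmax_att f Hy0; apply: H.
Qed.

Lemma maxset_eq1 (S : {set V}) (f : V -> R) :
  (forall y, y \in S -> 0 <= f y <= 1) ->
  mxs S f = 1 <-> exists2 y, y \in S & f y = 1.
Proof.
move=> H; rewrite /Defs.maxset; case: pickP => [y0 Hy0|H0].
  split.
    by have [y Hy ->] := bigmax_att f Hy0; exists y.
  move=> [y Hy Hf]; apply/eqP; rewrite eq_le; apply/andP; split.
    by have [y' Hy' ->] := bigmax_att f Hy0; have /andP[] := H y' Hy'.
  rewrite -Hf; apply: bigmax_ge => //; exact: mem_index_enum.
split; first by move/esym/eqP; rewrite oner_eq0.
by move=> [y Hy _]; rewrite H0 in Hy.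
Qed.

Lemma sum_le_card (S : {set V}) (g : V -> R) :
  (forall x, x \in S -> g x <= 1) -> \sum_(x in S) g x <= #|S|%:R.
Proof.
move=> H; rewrite -sum1_card natr_sum; apply: ler_sum => i Hi; exact: H.
Qed.

Lemma sum_eq_card (S : {set V}) (g : V -> R) :
  (forall x, x \in S -> g x <= 1) ->
  \sum_(x in S) g x = #|S|%:R <-> (forall x, x \in S -> g x = 1).
Proof.
move=> H; split; last first.
  by move=> H1; rewrite -sum1_card natr_sum; apply: eq_bigr => i Hi; rewrite H1.
move=> Hs x Hx.
have H0 : \sum_(i in S) (1 - g i) = 0.
  by rewrite sumrB Hs -sum1_card natr_sum subrr.
have Hp : forall i, i \in S -> 0 <= 1 - g i.
  by move=> i Hi; rewrite subr_ge0; apply: H.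
have := psumr_eq0P Hp H0 Hx.
by move=> Hz; apply/eqP; rewrite eq_sym -subr_eq0 Hz.
Qed.

Lemma Aagg_facts (F : V -> V -> R) (S1 S2 : {set V}) :
  (forall x y, 0 <= F x y <= 1) ->
  (0 <= Aagg F S1 S2 <= 1) /\
  (Aagg F S1 S2 = 1 <->
   (forall x, x \in S1 -> exists2 y, y \in S2 & F x y = 1) /\
   (forall y, y \in S2 -> exists2 x, x \in S1 & F x y = 1)).
Proof.
move=> HF; rewrite /Aagg; case: ifP => [/andP[/eqP-> /eqP->]|Hne].
  split; first by rewrite ler01 lexx.
  by split => // _; split => x; rewrite inE.
have Hb1 : forall x, x \in S1 -> 0 <= mxs S2 (fun y => F x y) <= 1.
  by move=> x _; apply: maxset_bnd => y _; apply: HF.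
have Hb2 : forall y, y \in S2 -> 0 <= mxs S1 (fun x => F x y) <= 1.
  by move=> y _; apply: maxset_bnd => x _; apply: HF.
set a := \sum_(x in S1) _; set b := \sum_(y in S2) _.
have ha : a <= #|S1|%:R by apply: sum_le_card => x /Hb1 /andP[].
have hb : b <= #|S2|%:R by apply: sum_le_card => x /Hb2 /andP[].
have ha0 : 0 <= a by apply: sumr_ge0 => x /Hb1 /andP[].
have hb0 : 0 <= b by apply: sumr_ge0 => x /Hb2 /andP[].
set n := (#|S1| + #|S2|)%:R.
have hn : 0 < n.
  rewrite /n ltr0n lt0n; apply/negP => H0.
  move: H0; rewrite addn_eq0 => /andP[/eqP h1 /eqP h2].
  by move: Hne; rewrite (cards0_eq h1) (cards0_eq h2) !eqxx.
have hnn : n != 0 by rewrite gt_eqF.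
have hnd : n = #|S1|%:R + #|S2|%:R by rewrite /n natrD.
have hi : 0 < n^-1 by rewrite invr_gt0.
split.
  apply/andP; split; first by apply: mulr_ge0; [exact: ltW|lra].
  rewrite -(mulVf hnn); apply: ler_wpM2l; [exact: ltW|lra].
have key : n^-1 * (a + b) = 1 <-> a + b = n.
  split=> H.
    have -> : a + b = n * (n^-1 * (a + b)) by rewrite mulrA mulfV // mul1r.
    by rewrite H mulr1.
  by rewrite H mulVf.
rewrite key.
have e1 : a = #|S1|%:R <-> (forall x, x \in S1 -> exists2 y, y \in S2 & F x y = 1).
  rewrite sum_eq_card; last by move=> x /Hb1 /andP[].
  split=> H x Hx.
    by apply/(maxset_eq1 (fun y => F x y)) => [y _|]; [apply: HF|apply: H].
  by apply/(maxset_eq1 (fun y => F x y)) => [y _|]; [apply: HF|apply: H].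
have e2 : b = #|S2|%:R <-> (forall y, y \in S2 -> exists2 x, x \in S1 & F x y = 1).
  rewrite sum_eq_card; last by move=> x /Hb2 /andP[].
  split=> H x Hx.
    by apply/(maxset_eq1 (fun y => F y x)) => [y _|]; [apply: HF|apply: H].
  by apply/(maxset_eq1 (fun y => F y x)) => [y _|]; [apply: HF|apply: H].
rewrite -e1 -e2; split.
  move=> H; split; lra.
by move=> [-> ->]; rewrite hnd.
Qed.
End Aux.

Theorem theorem4 (R : realFieldType) (V : finType) (L : eqType)
  (E : rel V) (lab : V -> L) (Lsim : V -> V -> R) (wp : R) :
  (forall u v, 0 <= Lsim u v <= 1) ->
  (forall u v, Lsim u v = 1 <-> lab u = lab v) ->
  0 < wp < 1 ->
  forall (k : nat) (u v : V),
    kbisim E lab k u v <-> Fk E wp Lsim k u v = 1.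
Proof.
move=> HL Hlab /andP[w0 w1].
have Hb : forall k u v, 0 <= Fk E wp Lsim k u v <= 1.
  elim=> [|k IH] u v /=; first exact: HL.
  have [/andP[A0 A1] _] := @Aagg_facts R V _ (outN E u) (outN E v) IH.
  have /andP[L0 L1] := HL u v.
  apply/andP; split; nra.
elim=> [|k IH] u v /=; first by rewrite Hlab.
have [/andP[A0 A1] HA] := @Aagg_facts R V _ (outN E u) (outN E v) (Hb k).
have /andP[L0 L1] := HL u v.
set A := Aagg _ _ _ in A0 A1 HA *.
have -> : wp * A + (1 - wp) * Lsim u v = 1 <-> A = 1 /\ Lsim u v = 1.
  split; last by move=> [-> ->]; ring.
  move=> H.
  have h1 : wp * (1 - A) = 0 by nra.
  have h2 : (1 - wp) * (1 - Lsim u v) = 0 by nra.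
  move: h1 h2 => /eqP; rewrite mulf_eq0 gt_eqF //= subr_eq0 => /eqP <-.
  move=> /eqP; rewrite mulf_eq0 subr_eq0 (gt_eqF w1) /= subr_eq0 => /eqP <-.
  by [].
rewrite HA Hlab.
split.
  move=> [Hl H1 H2]; split => //; split.
    by move=> x /H1 [y Hy /IH]; exists y.
  by move=> y /H2 [x Hx /IH]; exists x.
move=> [[H1 H2] Hl]; split => //.
  by move=> x /H1 [y Hy /IH]; exists y.
by move=> y /H2 [x Hx /IH]; exists x.
Qed.
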